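(* Let $x\in\mathbb{R}$, $\lambda\in\mathbb{C}$, and $n,k\in\mathbb{N}_0$. Then $$y_{3}(n,k;\lambda;1,x)=\frac{1}{k!}\sum_{j=0}^{k}\binom{k}{j}\lambda^{j}\sum_{m=0}^{n}k^{m}j^{n-m}B_{m}^{n}(x)$$ and $$y_{3}(n,k;\lambda;1,x)=\sum_{m=0}^{n}k^{m}B_{m}^{n}(x)\,y_{1}(n-m,k;\lambda),$$ where $B_m^n(x)=\binom{n}{m}x^{m}(1-x)^{n-m}$ are the Bernstein basis functions.
   Context: For $a,b\in\mathbb{R}$, $\lambda\in\mathbb{C}$ and $k\in\mathbb{N}_0$: the numbers $y_3(n,k;\lambda;a,b)$ are defined by $\frac{e^{bkt}}{k!}(\lambda e^{(a-b)t}+1)^{k}=\sum_{n\ge0}y_{3}(n,k;\lambda;a,b)\frac{t^{n}}{n!}$, and the numbers $y_1(n,k;\lambda)$ by $\frac{1}{k!}(\lambda e^{t}+1)^{k}=\sum_{n\ge0}y_{1}(n,k;\lambda)\frac{t^{n}}{n!}$. Convention: $0^0=1$. *)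

(* Defs.v *)
From mathcomp Require Import all_boot all_algebra.
From mathcomp Require Import reals.
From mathcomp.real_closed Require Import complex.

Set Implicit Arguments.
Unset Strict Implicit.
Unset Printing Implicit Defensive.

Import GRing.Theory Num.Theory.
Local Open Scope ring_scope.

Section Defs.
Variable R : realType.
Local Notation C := R[i].

Definition rC (x : R) : C := (x%:C)%C.

(* Truncation at degree N of the formal power series exp(c t) = sum c^i t^i / i! *)
Definition expTrunc (N : nat) (c : C) : {poly C} :=
  \poly_(i < N.+1) (c ^+ i / (i`!)%:R).

(* y_3(n,k;lambda;a,b) : n! times the coefficient of t^n in the formal power
   series  e^{bkt}/k! (lambda e^{(a-b)t} + 1)^k.  Truncating every factor at
   degree n does not change the coefficient of t^n. *)
Definition y3 (n k : nat) (lam : C) (a b : R) : C :=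
  (n`!)%:R * ((expTrunc n (rC b * k%:R)
               * (lam *: expTrunc n (rC (a - b)) + 1) ^+ k)`_n) / (k`!)%:R.

(* y_1(n,k;lambda) : n! times the coefficient of t^n in (lambda e^t + 1)^k / k! *)
Definition y1 (n k : nat) (lam : C) : C :=
  (n`!)%:R * (((lam *: expTrunc n 1 + 1) ^+ k)`_n) / (k`!)%:R.

Definition bernstein (n m : nat) (x : R) : R :=
  ('C(n, m))%:R * x ^+ m * (1 - x) ^+ (n - m).

End Defs.

(* Main.v *)
Require Import Defs.
From mathcomp Require Import all_boot all_algebra.
From mathcomp Require Import reals.
From mathcomp.real_closed Require Import complex.
From mathcomp Require Import ring lra.
Import GRing.Theory Num.Theory.
Local Open Scope ring_scope.
Set Implicit Arguments. Unset Strict Implicit.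

Section Aux.
Variable R : realType.
Local Notation C := R[i].

Definition eqm (N : nat) (p q : {poly C}) := forall i, (i <= N)%N -> p`_i = q`_i.

Lemma eqmM N p p' q q' : eqm N p p' -> eqm N q q' -> eqm N (p * q) (p' * q').
Proof.
move=> hp hq i hi; rewrite !coefM; apply: eq_bigr => j _.
rewrite hp ?hq //; last exact: leq_trans (ltnSE (ltn_ord j)) hi.
exact: leq_trans (leq_subr _ _) hi.
Qed.

Lemma eqmX N p q k : eqm N p q -> eqm N (p ^+ k) (q ^+ k).
Proof. by move=> h; elim: k => [|k IH] //; rewrite !exprS; apply: eqmM. Qed.

Lemma eqm_refl N p : eqm N p p.
Proof. by []. Qed.

Lemma eqm_trans N p q r : eqm N p q -> eqm N q r -> eqm N p r.
Proof. by move=> h1 h2 i hi; rewrite h1 ?h2. Qed.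

Lemma eqm_sym N p q : eqm N p q -> eqm N q p.
Proof. by move=> h i hi; rewrite h. Qed.

Lemma eqm_sum N (I : finType) (F G : I -> {poly C}) :
  (forall i, eqm N (F i) (G i)) -> eqm N (\sum_i F i) (\sum_i G i).
Proof. by move=> h i hi; rewrite !coef_sum; apply: eq_bigr => j _; rewrite h. Qed.

Lemma eqmZ N a p q : eqm N p q -> eqm N (a *: p) (a *: q).
Proof. by move=> h i hi; rewrite !coefZ h. Qed.

Lemma eqmMn N p q m : eqm N p q -> eqm N (p *+ m) (q *+ m).
Proof. by move=> h i hi; rewrite !coefMn h. Qed.

Lemma fact_neq0 m : (m`!)%:R != 0 :> C.
Proof. by rewrite pnatr_eq0 -lt0n fact_gt0. Qed.

Lemma coef_E N (c : C) i : (i <= N)%N -> (expTrunc N c)`_i = c ^+ i / (i`!)%:R.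
Proof. by move=> hi; rewrite coef_poly ltnS hi. Qed.

Lemma eqmE1 N (a b : C) : eqm N (expTrunc N a * expTrunc N b) (expTrunc N (a + b)).
Proof.
move=> i hi; rewrite coefM coef_E // addrC exprDn mulr_suml.
apply: eq_bigr => [[j hj]] _ /=.
have hji : (j <= i)%N by [].
rewrite !coef_E //; [|exact: leq_trans (leq_subr _ _) hi|exact: leq_trans hji hi].
rewrite -(bin_fact hji) !natrM mulr_natr.
have h1 := fact_neq0 j; have h2 := fact_neq0 (i - j); 
have h3 : ('C(i, j))%:R != 0 :> C by rewrite pnatr_eq0 -lt0n bin_gt0.
rewrite -mulr_natr; field.
by rewrite h1 h2 h3.
Qed.

Lemma eqmE0 N : eqm N 1 (expTrunc N 0).
Proof.
move=> i hi; rewrite coef_E // coef1; case: i hi => [|i] _.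
  by rewrite expr0 fact0 divr1.
by rewrite expr0n /= mul0r.
Qed.

Lemma eqmEX N (c : C) j : eqm N (expTrunc N c ^+ j) (expTrunc N (j%:R * c)).
Proof.
elim: j => [|j IH]; first by rewrite expr0 mul0r; apply: eqmE0.
rewrite exprS; apply: eqm_trans (eqmM (eqm_refl (N:=N) (expTrunc N c)) IH) _.
by rewrite -addn1 natrD mulrDl mul1r addrC; apply: eqmE1.
Qed.

Lemma main_coef N (d c lam : C) k :
  (expTrunc N d * (lam *: expTrunc N c + 1) ^+ k)`_N =
  \sum_(j < k.+1) ('C(k, j))%:R * lam ^+ j * ((d + j%:R * c) ^+ N / (N`!)%:R).
Proof.
rewrite exprD1n mulr_sumr.
have -> : \sum_(i < k.+1) expTrunc N d * ((lam *: expTrunc N c) ^+ i *+ 'C(k, i))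
  = \sum_(i < k.+1) ((lam ^+ i) *: (expTrunc N d * expTrunc N c ^+ i)) *+ 'C(k, i).
  by apply: eq_bigr => i _; rewrite exprZn mulrnAr scalerAr.
have H : eqm N (\sum_(i < k.+1) ((lam ^+ i) *: (expTrunc N d * expTrunc N c ^+ i)) *+ 'C(k, i))
   (\sum_(i < k.+1) ((lam ^+ i) *: expTrunc N (d + i%:R * c)) *+ 'C(k, i)).
  apply: eqm_sum => i; apply/eqmMn/eqmZ.
  exact: eqm_trans (eqmM (eqm_refl _) (@eqmEX N c i)) (@eqmE1 N d (i%:R * c)).
rewrite (H N (leqnn N)) coef_sum; apply: eq_bigr => i _.
by rewrite coefMn coefZ coef_E // -[_ *+ 'C(k, i)]mulr_natl !mulrA.
Qed.

End Aux.
Lemma binom_bern (R : realType) (x : R) (n k j : nat) :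
  (rC x * k%:R + j%:R * rC (1 - x)) ^+ n =
  \sum_(m < n.+1) (k%:R) ^+ m * (j%:R) ^+ (n - m) * rC (bernstein n m x).
Proof.
rewrite addrC exprDn; apply: eq_bigr => m _.
rewrite /bernstein /rC !rmorphM !rmorphXn rmorph_nat !exprMn.
rewrite -mulr_natl; ring.
Qed.

Lemma y3_eq (R : realType) (x : R) (lam : R[i]) (n k : nat) :
  y3 n k lam 1 x =
    (k`!)%:R^-1 * \sum_(j < k.+1) ('C(k, j))%:R * lam ^+ j *
      \sum_(m < n.+1) (k%:R) ^+ m * (j%:R) ^+ (n - m) * rC (bernstein n m x).
Proof.
rewrite /y3 main_coef mulr_sumr mulr_suml mulr_sumr; apply: eq_bigr => j _.
rewrite -binom_bern.
have h := fact_neq0 R n; have h2 := fact_neq0 R k.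
field; by rewrite h h2.
Qed.

Lemma y1_eq (R : realType) (lam : R[i]) (N k : nat) :
  y1 N k lam = (k`!)%:R^-1 * \sum_(j < k.+1) ('C(k, j))%:R * lam ^+ j * (j%:R) ^+ N.
Proof.
rewrite /y1.
have -> : ((lam *: expTrunc N 1 + 1) ^+ k)`_N
   = (expTrunc N 0 * (lam *: expTrunc N 1 + 1) ^+ k)`_N.
  by rewrite -(eqmM (@eqmE0 R N) (eqm_refl ((lam *: expTrunc N 1 + 1) ^+ k)) (leqnn N)) mul1r.
rewrite main_coef mulr_sumr mulr_suml mulr_sumr; apply: eq_bigr => j _.
have h := fact_neq0 R N; have h2 := fact_neq0 R k.
rewrite add0r mulr1; field; by rewrite h h2.
Qed.

Theorem mainTheorem4 (R : realType) (x : R) (lam : R[i]) (n k : nat) :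
  y3 n k lam 1 x =
    (k`!)%:R^-1 * \sum_(j < k.+1) ('C(k, j))%:R * lam ^+ j *
      \sum_(m < n.+1) (k%:R) ^+ m * (j%:R) ^+ (n - m) * rC (bernstein n m x)
  /\
  y3 n k lam 1 x =
    \sum_(m < n.+1) (k%:R) ^+ m * rC (bernstein n m x) * y1 (n - m) k lam.
Proof.
split; first exact: y3_eq.
rewrite y3_eq.
under [RHS]eq_bigr => m _ do rewrite y1_eq big_distrr big_distrr /=.
rewrite big_distrr /= exchange_big /=; apply: eq_bigr => j _.
rewrite big_distrr big_distrr /=; apply: eq_bigr => m _.
ring.
Qed.
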